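(* Let $a_0,a_1,a_2,a_3\in\mathbb{R}$ and consider the monic binary quartic form $$f(x,y)=x^4+a_3x^3y+a_2x^2y^2+a_1xy^3+a_0y^4 .$$ Let $$b_1=\tfrac14\,(4a_0-a_2^2-a_1a_3),\qquad b_2=\tfrac{a_2}{2},\qquad \lambda_0=\frac{4b_2+2\sqrt{3b_1+4b_2^2}}{3}.$$ Then $f$ is positive semi-definite if and only if $\lambda_0$ is a real number and the $3\times 3$ real symmetric matrix $$\mathbf{M}_{\lambda_0}=\begin{bmatrix}1&\frac{a_3}{2}&\frac{a_2-\lambda_0}{2}\\[2pt] \frac{a_3}{2}&\lambda_0&\frac{a_1}{2}\\[2pt] \frac{a_2-\lambda_0}{2}&\frac{a_1}{2}&a_0\end{bmatrix}$$ is positive semi-definite. Likewise, $f$ is positive definite if and only if $\lambda_0$ is a real number and $\mathbf{M}_{\lambda_0}$ is positive definite.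
   Context: A binary form $f(x,y)$ with real coefficients is positive definite (resp. positive semi-definite) if $f(x,y)>0$ (resp. $f(x,y)\ge 0$) for all real $x,y$ not both zero. The quantity $\lambda_0$ is real exactly when $3b_1+4b_2^2\ge 0$. *)

(* Defs.v *)
From HB Require Import structures.
From mathcomp Require Import all_boot all_order all_algebra.
Set Implicit Arguments. Unset Strict Implicit. Unset Printing Implicit Defensive.
Import Order.TTheory GRing.Theory Num.Theory.
Local Open Scope ring_scope.

Definition quartic (R : rcfType) (a0 a1 a2 a3 : R) (x y : R) : R :=
  x ^+ 4 + a3 * x ^+ 3 * y + a2 * x ^+ 2 * y ^+ 2 + a1 * x * y ^+ 3 + a0 * y ^+ 4.

Definition form_psd (R : rcfType) (f : R -> R -> R) : Prop :=
  forall x y : R, ~ (x = 0 /\ y = 0) -> 0 <= f x y.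
Definition form_pd (R : rcfType) (f : R -> R -> R) : Prop :=
  forall x y : R, ~ (x = 0 /\ y = 0) -> 0 < f x y.

Definition mx_psd (R : rcfType) (n : nat) (M : 'M[R]_n) : Prop :=
  forall v : 'cV[R]_n, 0 <= (v^T *m M *m v) 0 0.
Definition mx_pd (R : rcfType) (n : nat) (M : 'M[R]_n) : Prop :=
  forall v : 'cV[R]_n, v != 0 -> 0 < (v^T *m M *m v) 0 0.

Definition b1 (R : rcfType) (a0 a1 a2 a3 : R) : R :=
  (4 * a0 - a2 ^+ 2 - a1 * a3) / 4.
Definition b2 (R : rcfType) (a2 : R) : R := a2 / 2.

(* lambda0 is real exactly when its radicand is nonnegative. *)
Definition lambda0_real (R : rcfType) (a0 a1 a2 a3 : R) : Prop :=
  0 <= 3 * b1 a0 a1 a2 a3 + 4 * b2 a2 ^+ 2.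

(* Its value (meaningful when lambda0_real holds). *)
Definition lambda0 (R : rcfType) (a0 a1 a2 a3 : R) : R :=
  (4 * b2 a2 + 2 * Num.sqrt (3 * b1 a0 a1 a2 a3 + 4 * b2 a2 ^+ 2)) / 3.

Definition Mlam (R : rcfType) (a0 a1 a2 a3 lam : R) : 'M[R]_3 :=
  \matrix_(i < 3, j < 3)
    nth 0 (nth [::]
      [:: [:: 1; a3 / 2; (a2 - lam) / 2];
          [:: a3 / 2; lam; a1 / 2];
          [:: (a2 - lam) / 2; a1 / 2; a0]] i) j.

(* Main.v *)
Require Import Defs.
From mathcomp Require Import all_boot all_order all_algebra.
From mathcomp Require Import ring lra.
From mathcomp Require Import complex.
Import Order.TTheory GRing.Theory Num.Theory.
Local Open Scope ring_scope.

Lemma croot (R : rcfType) (a0 a1 a2 a3 : R) : exists a b : R,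
  a^+4 - 6*a^+2*b^+2 + b^+4 + a3*(a^+3 - 3*a*b^+2) + a2*(a^+2 - b^+2) + a1*a + a0 = 0 /\
  4*a^+3*b - 4*a*b^+3 + a3*(3*a^+2*b - b^+3) + a2*(2*a*b) + a1*b = 0.
Proof.
have [z hz] := @complex_acf_axiom R 4 (nth 0 [:: (-a0)%:C; (-a1)%:C; (-a2)%:C; (-a3)%:C])%C isT.
move: hz; rewrite !big_ord_recl big_ord0 /=.
case: z => a b.
rewrite /bump /= !exprS !expr0.
simpc.
case=> h1 h2; exists a, b; split.
  move/eqP: h1; rewrite -subr_eq0 => /eqP h; rewrite -h; ring.
move/eqP: h2; rewrite -subr_eq0 => /eqP h; rewrite -h; ring.
Qed.

Lemma eqle (R : numDomainType) (x y : R) : x = y -> x <= y.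
Proof. by move->. Qed.

Definition P4 {R : rcfType} (a0 a1 a2 a3 t : R) :=
  t^+4 + a3*t^+3 + a2*t^+2 + a1*t + a0.

Lemma r1_zero (R : rcfType) (a g1 g0 r1 : R) :
  (forall t, 0 <= (t-a)^+2 * (t^+2 + g1*t + g0) + r1*(t - a)) -> r1 = 0.
Proof.
move=> Hp; case: (eqVneq r1 0) => // r1n0; exfalso.
pose c1 := 2*a + g1; pose c0 := a^+2 + g1*a + g0.
pose N := r1^+2 + `|c1*r1| + `|c0| + 1.
have N1 : 1 <= N by have := sqr_ge0 r1; have := normr_ge0 (c1*r1); have := normr_ge0 c0; rewrite /N; lra.
have Np : 0 < N by apply: lt_le_trans N1.
pose k := N^-1.
have k0 : 0 < k by rewrite /k invr_gt0.
have k1 : k <= 1 by rewrite /k invf_le1.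
have kN : k * N = 1 by rewrite /k mulVf // gt_eqF.
have := Hp (a - r1 * k).
have -> : (a - r1 * k - a) ^+ 2 * ((a - r1 * k) ^+ 2 + g1 * (a - r1 * k) + g0) +
    r1 * (a - r1 * k - a) = r1^+2 * k * (k * (r1^+2*k^+2 - c1*r1*k + c0) - 1)
  by rewrite /c1 /c0; ring.
have r2 : 0 < r1^+2 by rewrite exprn_even_gt0 //.
have i1 : r1^+2*k^+2 <= r1^+2.
  rewrite ler_piMr // ?(ltW r2) //; rewrite expr_le1 //; lra.
have i2 : - (c1*r1*k) <= `|c1*r1|.
  have h1 : - (c1*r1*k) <= `|c1*r1*k| by rewrite -normrN ler_norm.
  have h2 : `|c1*r1*k| = `|c1*r1| * k by rewrite normrM (gtr0_norm k0).
  have h3 : `|c1*r1| * k <= `|c1*r1| by rewrite ler_piMr.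
  lra.
have i3 : c0 <= `|c0| by apply: ler_norm.
have inner : r1^+2*k^+2 - c1*r1*k + c0 <= N - 1 by rewrite /N; lra.
have : k * (r1^+2*k^+2 - c1*r1*k + c0) <= k * (N - 1) by rewrite ler_pM2l.
rewrite mulrBr kN mulr1 => H1.
have : k * (r1 ^+ 2 * k ^+ 2 - c1 * r1 * k + c0) - 1 < 0 by lra.
move=> H2 H3.
have : 0 < r1^+2 * k by rewrite mulr_gt0.
move=> H4.
rewrite pmulr_rge0 // in H3; lra.
Qed.

Lemma f_nonneg (R : rcfType) (a b e f : R) :
  (forall t, 0 <= ((t-a)^+2 + b^+2) * ((t-e)^+2 + f)) -> 0 <= f.
Proof.
move=> Hp; have [//|fn] := leP 0 f; exfalso.
pose u := Num.sqrt (-f) / 2.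
have sf : Num.sqrt (-f) ^+ 2 = -f by rewrite sqr_sqrtr // oppr_ge0 ltW.
have sp : 0 < Num.sqrt (-f) by rewrite sqrtr_gt0 oppr_gt0.
have up : 0 < u by rewrite /u divr_gt0.
have u2 : u^+2 = -f/4 by rewrite /u expr_div_n sf; field.
have [t [ta tg]] : exists t, t != a /\ (t - e)^+2 = u^+2.
  case: (eqVneq (e + u) a) => h.
    exists (e - u); split; last by ring.
    apply/eqP => h2; move: up; rewrite -h in h2.
    have : u = 0 by lra.
    by move=> ->; rewrite ltxx.
  by exists (e + u); split => //; ring.
have q0 : 0 < (t-a)^+2 + b^+2.
  have : 0 < (t-a)^+2 by rewrite exprn_even_gt0 // subr_eq0.
  have := sqr_ge0 b; lra.
have g0 : (t-e)^+2 + f < 0 by rewrite tg u2; lra.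
have := Hp t; rewrite pmulr_rge0 //; lra.
Qed.

Lemma sos (R : rcfType) (a0 a1 a2 a3 : R) :
  (forall t, 0 <= P4 a0 a1 a2 a3 t) ->
  exists h B g D : R, a3 = 4*h /\ a2 = 6*h^+2 + 2*B + g^+2 /\
    a1 = 4*h^+3 + 2*h*(2*B+g^+2) + 2*g*D /\
    a0 = h^+4 + (2*B+g^+2)*h^+2 + 2*g*D*h + B^+2 + D^+2.
Proof.
move=> Hp.
have [a [b [Hre Him]]] := @croot R a0 a1 a2 a3.
have [g1 E3] : exists g1, a3 = g1 - 2*a by exists (a3 + 2*a); ring.
have [g0 E2] : exists g0, a2 = g0 + (a^+2+b^+2) - 2*a*g1 by exists (a2 - (a^+2+b^+2) + 2*a*g1); ring.
have [r1 E1] : exists r1, a1 = r1 - 2*a*g0 + (a^+2+b^+2)*g1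
  by exists (a1 + 2*a*g0 - (a^+2+b^+2)*g1); ring.
have [r0 E0] : exists r0, a0 = r0 + (a^+2+b^+2)*g0
  by exists (a0 - (a^+2+b^+2)*g0); ring.
subst a3 a2 a1 a0.
have Hre' : r1 * a + r0 = 0 by rewrite -Hre; ring.
have Him' : r1 * b = 0 by rewrite -Him; ring.
have r10 : r1 = 0.
  case: (eqVneq b 0) => b0; last by move/eqP: Him'; rewrite mulf_eq0 (negPf b0) orbF => /eqP.
  subst b.
  apply: (@r1_zero R a g1 g0 r1) => t.
  have := Hp t; rewrite /P4.
  have -> : r0 = - r1 * a by lra.
  by move=> H; apply: le_trans H _; apply: eqle; ring.
have r00 : r0 = 0 by rewrite r10 mul0r add0r in Hre'.
subst r1 r0.
pose e := - g1 / 2.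
have Eg1 : g1 = -2 * e by rewrite /e; field.
have [f Ef] : exists f, g0 = f + e^+2 by exists (g0 - e^+2); ring.
clearbody e; subst g1 g0.
have f0 : 0 <= f.
  apply: (@f_nonneg R a b e f) => t.
  have := Hp t; rewrite /P4.
  by move=> H; apply: le_trans H _; apply: eqle; ring.
pose F := Num.sqrt f.
have EF : f = F^+2 by rewrite /F sqr_sqrtr.
clearbody F; subst f.
pose h := -(a+e)/2.
have Ea : a = -2*h - e by rewrite /h; field.
clearbody h; subst a.
exists h, ((-2*h-e)*e - b*F - h^+2), (F + b), (-((-2*h-e)*F + b*e) - (F+b)*h).
split; first ring.
split; first ring.
split; first ring.
ring.
Qed.
Lemma quad2 {R : rcfType} (A Bc C w z : R) : 0 <= A -> 0 <= C -> Bc^+2 <= 4*A*C ->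
  0 <= A*w^+2 + Bc*w*z + C*z^+2.
Proof.
move=> hA hC hD.
have [A0|Ap] := eqVneq A 0.
  subst A.
  have : Bc^+2 <= 0 by lra.
  have := sqr_ge0 Bc.
  move=> h1 h2; have : Bc^+2 = 0 by lra.
  move/eqP; rewrite sqrf_eq0 => /eqP ->.
  have := sqr_ge0 z; nra.
have Ap' : 0 < A by rewrite lt_def Ap.
have E : 4*A*(A*w^+2 + Bc*w*z + C*z^+2) = (2*A*w + Bc*z)^+2 + (4*A*C - Bc^+2)*z^+2 by ring.
have : 0 <= (2*A*w + Bc*z)^+2 + (4*A*C - Bc^+2)*z^+2.
  apply: addr_ge0; first exact: sqr_ge0.
  apply: mulr_ge0; [lra | exact: sqr_ge0].
rewrite -E => H.
have H4 : 0 < 4*A by lra.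
by rewrite pmulr_rge0 // in H.
Qed.

Lemma quad2s {R : rcfType} (A Bc C w z : R) : 0 <= A -> 0 <= C -> Bc^+2 < 4*A*C ->
  (w != 0) || (z != 0) -> 0 < A*w^+2 + Bc*w*z + C*z^+2.
Proof.
move=> hA hC hD hwz.
have Ap' : 0 < A.
  rewrite lt_def; apply/andP; split => //; apply/eqP => A0; subst A.
  have := sqr_ge0 Bc; lra.
have E : 4*A*(A*w^+2 + Bc*w*z + C*z^+2) = (2*A*w + Bc*z)^+2 + (4*A*C - Bc^+2)*z^+2 by ring.
have : 0 < (2*A*w + Bc*z)^+2 + (4*A*C - Bc^+2)*z^+2.
  have [z0|zn] := eqVneq z 0.
    subst z; rewrite eqxx orbF in hwz.
    rewrite mulr0 addr0 expr0n /= mulr0 addr0 exprn_even_gt0 //.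
    by rewrite !mulf_neq0 // ?pnatr_eq0 // gt_eqF.
  apply: ltr_wpDl; first exact: sqr_ge0.
  apply: mulr_gt0; [lra | by rewrite exprn_even_gt0].
rewrite -E => H.
have H4 : 0 < 4*A by lra.
by rewrite pmulr_rgt0 // in H.
Qed.

Lemma sq_le {R : rcfType} (y s : R) : 0 <= s -> y^+2 <= s^+2 -> y <= s.
Proof.
move=> s0 h; have [y0|yp] := leP y 0; first by apply: le_trans s0.
by rewrite -(@ler_pXn2r _ 2) // ?nnegrE // ltW.
Qed.

Lemma depfacts {R : rcfType} (B g D s : R) : 0 <= s ->
  s^+2 = 12*(B^+2+D^+2) + (2*B+g^+2)^+2 ->
  [/\ 0 <= 2*(2*B+g^+2) + s, 2*B+g^+2 <= s & 0 <= (g^+2 - 4*B) + 2*s].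
Proof.
move=> s0 hs; split.
- have [P0|Pn] := leP 0 (2*B+g^+2); first lra.
  suff : -(2*(2*B+g^+2)) <= s by lra.
  apply: sq_le => //; rewrite hs.
  have : g^+2 * (4*B+g^+2) <= 0.
    apply: mulr_ge0_le0; [exact: sqr_ge0 | have := sqr_ge0 g; lra].
  have := sqr_ge0 D; move=> h1 h2.
  have -> : (- (2 * (2 * B + g ^+ 2))) ^+ 2 = 12*(B^+2+D^+2) + (2*B+g^+2)^+2 - (12*D^+2 - 3*(g^+2*(4*B+g^+2))) by ring.
  lra.
- apply: sq_le => //; rewrite hs.
  have := sqr_ge0 B; have := sqr_ge0 D; lra.
- suff : -(g^+2 - 4*B) <= 2*s by lra.
  apply: sq_le; first lra.
  have -> : (2*s)^+2 = 4 * s^+2 by ring.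
  rewrite hs.
  have -> : 4 * (12*(B^+2+D^+2) + (2*B+g^+2)^+2) = (-(g^+2 - 4*B))^+2 + (3*(4*B+g^+2)^+2 + 48*D^+2) by ring.
  have := sqr_ge0 (4*B+g^+2); have := sqr_ge0 D; lra.
Qed.

Definition Qf {R : rcfType} (a0 a1 a2 a3 lam u w z : R) :=
  u^+2 + a3*u*w + (a2-lam)*u*z + lam*w^+2 + a1*w*z + a0*z^+2.

Section Main.
Variables (R : rcfType) (h B g D s : R).
Hypothesis s0 : 0 <= s.
Hypothesis hs : s^+2 = 12*(B^+2+D^+2) + (2*B+g^+2)^+2.
Let P := 2*B+g^+2.
Let Q := 2*g*D.
Let Rr := B^+2+D^+2.
Let X := g^+2 - 4*B.
Let L := (2*P+s)/3.
Let C := Rr - (P-L)^+2/4.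
Let a3 := 4*h.
Let a2 := 6*h^+2 + P.
Let a1 := 4*h^+3 + 2*h*P + Q.
Let a0 := h^+4 + P*h^+2 + Q*h + Rr.
Let lam := (2*a2 + s)/3.

Lemma Qf_dec u w z : Qf a0 a1 a2 a3 lam u w z =
  (u + 2*h*w + h^+2*z + (P - L)/2*z)^+2 + (L*(w+h*z)^+2 + Q*(w+h*z)*z + C*z^+2).
Proof. rewrite /Qf /lam /C /L /a0 /a1 /a2 /a3 /Rr /Q /P; by field. Qed.

Lemma L_ge0 : 0 <= L.
Proof. have [h1 _ _] := @depfacts _ B g D s s0 hs; rewrite /L /P; lra. Qed.

Lemma C_ge0 : 0 <= C.
Proof.
have [h1 h2 _] := @depfacts _ B g D s s0 hs.
have e : 36 * C = 2*(s-P)*(s+2*P) + 3*(12*(B^+2+D^+2) + (2*B+g^+2)^+2 - s^+2).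
  by rewrite /C /L /Rr /P; by field.
rewrite -hs subrr mulr0 addr0 in e.
have : 0 <= 2*(s-P)*(s+2*P) by apply: mulr_ge0; rewrite /P; lra.
lra.
Qed.

Lemma disc_id : 27*(4*L*C - Q^+2) = (X-s)^+2*(X+2*s).
Proof.
have e : 27*(4*L*C - Q^+2) - (X-s)^+2*(X+2*s) =
   (12*(B^+2+D^+2) + (2*B+g^+2)^+2 - s^+2)*(6*P+3*s-9*g^+2).
  by rewrite /C /L /Rr /P /Q /X; by field.
move: e; rewrite -hs subrr mul0r => /eqP; rewrite subr_eq0 => /eqP //.
Qed.

Lemma disc_ge0 : Q^+2 <= 4*L*C.
Proof.
have [_ _ h3] := @depfacts _ B g D s s0 hs.
have : 0 <= (X-s)^+2*(X+2*s) by apply: mulr_ge0; [exact: sqr_ge0 | rewrite /X; lra].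
rewrite -disc_id; lra.
Qed.

Lemma main_psd u w z : 0 <= Qf a0 a1 a2 a3 lam u w z.
Proof.
rewrite Qf_dec; apply: addr_ge0; first exact: sqr_ge0.
apply: quad2; [exact: L_ge0 | exact: C_ge0 | exact: disc_ge0].
Qed.

Lemma main_pd u w z : X != s -> X + 2*s != 0 -> (u != 0) || (w != 0) || (z != 0) ->
  0 < Qf a0 a1 a2 a3 lam u w z.
Proof.
move=> n1 n2 nz.
have dp : Q^+2 < 4*L*C.
  have : 0 < (X-s)^+2*(X+2*s).
    have [_ _ h3] := @depfacts _ B g D s s0 hs.
    apply: mulr_gt0; first by rewrite exprn_even_gt0 // subr_eq0.
    by rewrite lt_def n2 /X.
  rewrite -disc_id; lra.
rewrite Qf_dec.
have [wz|wz] := boolP ((w + h*z != 0) || (z != 0)).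
  apply: ltr_wpDl; first exact: sqr_ge0.
  by apply: quad2s => //; [exact: L_ge0 | exact: C_ge0].
move: wz; rewrite negb_or !negbK => /andP [/eqP e1 /eqP e2].
subst z; rewrite mulr0 addr0 in e1; subst w.
rewrite eqxx /= orbF in nz.
rewrite !(mulr0, addr0, expr0n, mul0r) /=.
by rewrite orbF in nz; rewrite exprn_even_gt0.
Qed.

End Main.

Lemma sq0 {R : rcfType} {x : R} : x^+2 = 0 -> x = 0.
Proof. by move/eqP; rewrite sqrf_eq0 => /eqP. Qed.

Lemma nondeg {R : rcfType} (h B g D s : R) : 0 <= s ->
  s^+2 = 12*(B^+2+D^+2) + (2*B+g^+2)^+2 ->
  (forall t, ((t+h)^+2+B)^+2 + (g*(t+h)+D)^+2 != 0) ->
  (g^+2 - 4*B != s) /\ (g^+2 - 4*B + 2*s != 0).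
Proof.
move=> s0 hs Hn; split; apply/eqP => E.
- have e : s^+2 - (g^+2-4*B)^+2 = 12*(D^+2 + B*g^+2) by rewrite hs; ring.
  rewrite E subrr in e.
  have eD : D^+2 = - (B*g^+2) by lra.
  have [g0|gn] := eqVneq g 0.
    subst g.
    have D0 : D = 0 by apply: sq0; rewrite eD; ring.
    subst D.
    have Bn : B <= 0 by move: E s0; rewrite expr0n /=; lra.
    have := Hn (- h + Num.sqrt (-B)).
    have -> : (- h + Num.sqrt (- B) + h) = Num.sqrt (-B) by ring.
    by rewrite sqr_sqrtr ?oppr_ge0 // addNr => /eqP; apply; ring.
  have := Hn (- h - D / g).
  have -> : (- h - D / g + h) = - (D / g) by ring.
  have -> : (- (D / g)) ^+ 2 + B = (D^+2 + B*g^+2) / g^+2 by field.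
  have -> : g * - (D / g) + D = 0 by field.
  by rewrite eD addNr mul0r expr0n /= addr0 eqxx.
- have e : 4*s^+2 - (g^+2-4*B)^+2 = 3*(4*B+g^+2)^+2 + 48*D^+2 by rewrite hs; ring.
  have ez : 4*s^+2 - (g^+2-4*B)^+2 = 0.
    have -> : g^+2 - 4*B = - (2*s) by lra.
    ring.
  rewrite ez in e.
  have hx := sqr_ge0 (4*B+g^+2); have hy := sqr_ge0 D.
  have e1 : (4*B+g^+2)^+2 = 0 by lra.
  have e2 : D^+2 = 0 by lra.
  have x0 := sq0 e1; have D0 := sq0 e2.
  have g2 : g^+2 <= 0 by have := sqr_ge0 g; lra.
  have gg : g^+2 = 0 by have := sqr_ge0 g; lra.
  have g0 := sq0 gg.
  subst g D.
  have B0 : B = 0 by move: x0; rewrite expr0n /=; lra.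
  subst B.
  have := Hn (-h).
  by rewrite addNr !(expr0n, mul0r, addr0) /= eqxx.
Qed.
Definition i1 : 'I_3 := lift ord0 ord0.
Definition i2 : 'I_3 := lift ord0 (lift ord0 ord0).

Lemma qformE (R : rcfType) (a0 a1 a2 a3 lam : R) (v : 'cV[R]_3) :
  (v^T *m Mlam a0 a1 a2 a3 lam *m v) 0 0 =
  Qf a0 a1 a2 a3 lam (v ord0 ord0) (v i1 ord0) (v i2 ord0).
Proof.
rewrite /Qf.
rewrite /Mlam !mxE !big_ord_recl !big_ord0 !mxE /=.
rewrite !big_ord_recl !big_ord0 !mxE /= /i1 /i2.
by field.
Qed.

Lemma quarticE {R : rcfType} (a0 a1 a2 a3 lam x y : R) :
  quartic a0 a1 a2 a3 x y = Qf a0 a1 a2 a3 lam (x^+2) (x*y) (y^+2).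
Proof. rewrite /quartic /Qf; ring. Qed.

Lemma vecnz {R : rcfType} (v : 'cV[R]_3) : v != 0 ->
  (v ord0 ord0 != 0) || (v i1 ord0 != 0) || (v i2 ord0 != 0).
Proof.
move=> vn; apply/negPn/negP; rewrite !negb_or !negbK => /andP [/andP [/eqP e0 /eqP e1] /eqP e2].
move/eqP: vn; apply; apply/matrixP => i j; rewrite mxE (ord1 j).
case: i => [[|[|[|i]]] Hi] //.
- by rewrite -e0; congr (v _ _); apply: val_inj.
- by rewrite -e1; congr (v _ _); apply: val_inj.
- by rewrite -e2; congr (v _ _); apply: val_inj.
Qed.

Definition vec3 {R : rcfType} (x y : R) : 'cV[R]_3 :=
  \col_(i < 3) nth 0 [:: x^+2; x*y; y^+2] i.

Lemma vec3E {R : rcfType} (a0 a1 a2 a3 lam x y : R) :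
  ((vec3 x y)^T *m Mlam a0 a1 a2 a3 lam *m vec3 x y) 0 0 = quartic a0 a1 a2 a3 x y.
Proof. by rewrite qformE (quarticE _ _ _ _ lam) /Qf /vec3 !mxE. Qed.

Lemma psd_params {R : rcfType} (a0 a1 a2 a3 : R) :
  form_psd (quartic a0 a1 a2 a3) ->
  exists h B g D : R, a3 = 4*h /\ a2 = 6*h^+2 + (2*B+g^+2) /\
    a1 = 4*h^+3 + 2*h*(2*B+g^+2) + 2*g*D /\
    a0 = h^+4 + (2*B+g^+2)*h^+2 + 2*g*D*h + (B^+2+D^+2).
Proof.
move=> Hf.
have Hp : forall t, 0 <= P4 a0 a1 a2 a3 t.
  move=> t; have := Hf t 1; rewrite /quartic /P4 expr1n !mulr1.
  by rewrite !expr1n !mulr1 => H; apply: H; case=> _ /eqP; rewrite oner_eq0.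
have [h [B [g [D [e3 [e2 [e1 e0]]]]]]] := @sos R a0 a1 a2 a3 Hp.
exists h, B, g, D; rewrite e3 e2 e1 e0; do !split; ring.
Qed.

Theorem theorem1 (R : rcfType) (a0 a1 a2 a3 : R) :
  (form_psd (quartic a0 a1 a2 a3) <->
     lambda0_real a0 a1 a2 a3 /\ mx_psd (Mlam a0 a1 a2 a3 (lambda0 a0 a1 a2 a3)))
  /\
  (form_pd (quartic a0 a1 a2 a3) <->
     lambda0_real a0 a1 a2 a3 /\ mx_pd (Mlam a0 a1 a2 a3 (lambda0 a0 a1 a2 a3))).
Proof.
have back1 : mx_psd (Mlam a0 a1 a2 a3 (lambda0 a0 a1 a2 a3)) -> form_psd (quartic a0 a1 a2 a3).
  by move=> Hm x y _; rewrite -(vec3E _ _ _ _ (lambda0 a0 a1 a2 a3)).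
have back2 : mx_pd (Mlam a0 a1 a2 a3 (lambda0 a0 a1 a2 a3)) -> form_pd (quartic a0 a1 a2 a3).
  move=> Hm x y nxy; rewrite -(vec3E _ _ _ _ (lambda0 a0 a1 a2 a3)); apply: Hm.
  apply/eqP => v0; apply: nxy.
  have ex : x^+2 = 0 by have := congr1 (fun M : 'M[R]_(3,1) => M ord0 ord0) v0; rewrite /vec3 !mxE.
  have ey : y^+2 = 0 by have := congr1 (fun M : 'M[R]_(3,1) => M i2 ord0) v0; rewrite /vec3 !mxE.
  by split; apply: sq0.
have fwd : form_psd (quartic a0 a1 a2 a3) ->
  exists h B g D s : R, [/\ 0 <= s, s^+2 = 12*(B^+2+D^+2) + (2*B+g^+2)^+2,
    lambda0_real a0 a1 a2 a3,
    forall lam u w z, lam = lambda0 a0 a1 a2 a3 ->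
      Qf a0 a1 a2 a3 lam u w z = Qf (h^+4 + (2*B+g^+2)*h^+2 + 2*g*D*h + (B^+2+D^+2))
         (4*h^+3 + 2*h*(2*B+g^+2) + 2*g*D) (6*h^+2 + (2*B+g^+2)) (4*h)
         ((2*(6*h^+2 + (2*B+g^+2)) + s)/3) u w z &
    forall t, quartic a0 a1 a2 a3 t 1 = ((t+h)^+2+B)^+2 + (g*(t+h)+D)^+2].
  move=> Hf.
  have [h [B [g [D [e3 [e2 [e1 e0]]]]]]] := @psd_params R a0 a1 a2 a3 Hf.
  have eI : 3 * b1 a0 a1 a2 a3 + 4 * b2 a2 ^+ 2 = (12*(B^+2+D^+2) + (2*B+g^+2)^+2) / 4.
    by rewrite /b1 /b2 e3 e2 e1 e0; field.
  have I0 : 0 <= (12*(B^+2+D^+2) + (2*B+g^+2)^+2) / 4.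
    apply: divr_ge0 => //; apply: addr_ge0; last exact: sqr_ge0.
    apply: mulr_ge0 => //; apply: addr_ge0; exact: sqr_ge0.
  exists h, B, g, D, (2 * Num.sqrt (3 * b1 a0 a1 a2 a3 + 4 * b2 a2 ^+ 2)); split.
  - by rewrite mulr_ge0 // sqrtr_ge0.
  - by rewrite exprMn sqr_sqrtr eI ?I0 //; field.
  - by rewrite /lambda0_real eI.
  - move=> lam u w z ->; rewrite /lambda0 /b2 /Qf e3 e2 e1 e0; by field.
  - by move=> t; rewrite /quartic e3 e2 e1 e0; ring.
split; split.
- move=> Hf; have [h [B [g [D [s [s0 hs hr hQ _]]]]]] := fwd Hf.
  split => // v; rewrite qformE /= (hQ _ _ _ _ erefl).
  exact: main_psd.
- by case=> _ /back1.
- move=> Hf.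
  have Hf' : form_psd (quartic a0 a1 a2 a3) by move=> x y n; apply/ltW/Hf.
  have [h [B [g [D [s [s0 hs hr hQ hq]]]]]] := fwd Hf'.
  split => // v vn; rewrite qformE /= (hQ _ _ _ _ erefl).
  have [n1 n2] : (g^+2 - 4*B != s) /\ (g^+2 - 4*B + 2*s != 0).
    apply: (@nondeg R h B g D s s0 hs) => t; rewrite -hq; apply: lt0r_neq0; apply: Hf.
    by case=> _ /eqP; rewrite oner_eq0.
  by apply: main_pd => //; apply: vecnz.
- by case=> _ /back2.
Qed.
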